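(* Let $(X,f)$ be a dynamical system. The following are equivalent: (1) $(X,f)$ is $\Delta$-transitive; (2) $(X,f)$ is $\mathcal{F}[\infty]$-point transitive; (3) $Trans_{\mathcal{F}[\infty]}(X,f)$ is residual in $X$.
   Context: A dynamical system is a pair $(X,f)$ with $X$ a compact metric space and $f:X\to X$ continuous. $\mathbb{N}=\{1,2,\dots\}$, $\mathbb{Z}_+=\{0,1,2,\dots\}$. $N(x,U)=\{n\in\mathbb{N}: f^n(x)\in U\}$. For a family $\mathcal{F}$ of subsets of $\mathbb{N}$, $x$ is an $\mathcal{F}$-transitive point if $N(x,U)\in\mathcal{F}$ for every non-empty open $U\subset X$; $Trans_{\mathcal{F}}(X,f)$ is the set of such points; $(X,f)$ is $\mathcal{F}$-point transitive if it is non-empty. For a system $(Y,g)$, $y$ is a transitive point if its $\omega$-limit set equals $Y$. $(X,f)$ is $\Delta$-transitive if for every $n\in\mathbb{N}$ there is $x\in X$ such that $(x,\dots,x)$ is a transitive point of $(X^n,f\times f^2\times\dots\times f^n)$. For $\mathbf{a}=(a_1,\dots,a_r)\in\mathbb{N}^r$, $\mathcal{F}[\mathbf{a}]$ is the collection of all $F\subset\mathbb{N}$ such that for every $(n_1,\dots,n_r)\in\mathbb{Z}_+^r$ there is $k\in\mathbb{N}$ with $ka_i+n_i\in F$ for all $i$; $\mathcal{F}[\infty]=\bigcap_{i=1}^\infty\mathcal{F}[(1,2,\dots,i)]$. *)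

(* Defs.v *)
From Stdlib Require Import Reals List Arith.
Open Scope R_scope.

Section Metric.
Context {X : Type} (d : X -> X -> R).

Definition is_metric : Prop :=
  (forall x y, 0 <= d x y) /\
  (forall x y, d x y = 0 <-> x = y) /\
  (forall x y, d x y = d y x) /\
  (forall x y z, d x z <= d x y + d y z).

Definition open_set (U : X -> Prop) : Prop :=
  forall x, U x -> exists eps, 0 < eps /\ forall y, d x y < eps -> U y.

Definition compact_metric : Prop :=
  forall (I : Type) (U : I -> X -> Prop),
    (forall i, open_set (U i)) -> (forall x, exists i, U i x) ->
    exists l : list I, forall x, exists i, In i l /\ U i x.

Definition continuous_map (f : X -> X) : Prop :=
  forall x eps, 0 < eps -> exists delta, 0 < delta /\
    forall y, d x y < delta -> d (f x) (f y) < eps.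

Definition dense_set (A : X -> Prop) : Prop :=
  forall U, open_set U -> (exists x, U x) -> exists x, U x /\ A x.

Definition residual_set (A : X -> Prop) : Prop :=
  exists V : nat -> X -> Prop,
    (forall k, open_set (V k) /\ dense_set (V k)) /\
    (forall x, (forall k, V k x) -> A x).

Definition iter (f : X -> X) (n : nat) (x : X) : X := Nat.iter n f x.

Definition hitting (f : X -> X) (x : X) (U : X -> Prop) : nat -> Prop :=
  fun n => (1 <= n)%nat /\ U (iter f n x).

(** Delta-transitivity: for every n >= 1 there is x such that (x,...,x) is a
    transitive point of (X^n, f x f^2 x ... x f^n), i.e. its omega-limit set
    is all of X^n.  With the (max) product metric, z = (z_1,...,z_n) is in
    the omega-limit set of (x,...,x) iff for every eps > 0 and every N there
    is m >= N with d(f^{i m}(x), z_i) < eps for all 1 <= i <= n.  Points of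
    X^n are represented as functions nat -> X (only indices 1..n matter). *)
Definition omega_limit_diag (f : X -> X) (n : nat) (x : X) (z : nat -> X) : Prop :=
  forall eps, 0 < eps -> forall N : nat, exists m : nat, (N <= m)%nat /\
    forall i, (1 <= i <= n)%nat -> d (iter f (i * m) x) (z i) < eps.

Definition Delta_transitive (f : X -> X) : Prop :=
  forall n : nat, (1 <= n)%nat ->
    exists x : X, forall z : nat -> X, omega_limit_diag f n x z.

Definition F_transitive_point (Fam : (nat -> Prop) -> Prop) (f : X -> X) (x : X) : Prop :=
  forall U, open_set U -> (exists y, U y) -> Fam (hitting f x U).

End Metric.

Definition F_a (a : list nat) (F : nat -> Prop) : Prop :=
  forall n : nat -> nat, exists k : nat, (1 <= k)%nat /\
    forall i, (i < length a)%nat -> F (k * nth i a 0 + n i)%nat.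

Definition F_inf (F : nat -> Prop) : Prop :=
  forall i : nat, (1 <= i)%nat -> F_a (seq 1 i) F.

(* Main.v *)
Require Import Defs.
From Stdlib Require Import Reals List Arith.
From Stdlib Require Import Lia Lra Cantor Classical ClassicalEpsilon.
Import Defs.
Open Scope R_scope.

Section Proof5p7.
Variables (X : Type) (d : X -> X -> R) (x0 : X).
Hypothesis Hd : is_metric d.
Hypothesis Hc : compact_metric d.
Variable f : X -> X.
Hypothesis Hf : continuous_map d f.

Lemma dsym : forall x y, d x y = d y x.
Proof. destruct Hd as (_ & _ & H & _). exact H. Qed.
Lemma dtri : forall x y z, d x z <= d x y + d y z.
Proof. destruct Hd as (_ & _ & _ & H). exact H. Qed.
Lemma dpos : forall x y, 0 <= d x y.
Proof. destruct Hd as (H & _). exact H. Qed.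

Lemma dzero x : d x x = 0.
Proof. destruct Hd as (_ & H & _). apply H; reflexivity. Qed.

Lemma ball_open c r : open_set d (fun y => d c y < r).
Proof.
  intros x Hx. exists (r - d c x). split; [lra|].
  intros y Hy. pose proof (dtri c x y). lra.
Qed.

Lemma iter_cont n : continuous_map d (iter f n).
Proof.
  induction n as [|n IH]; intros x eps He.
  - exists eps. split; auto.
  - destruct (Hf (iter f n x) eps He) as (e1 & He1 & H1).
    destruct (IH x e1 He1) as (e2 & He2 & H2).
    exists e2. split; auto. intros y Hy. unfold iter in *. simpl. apply H1. apply H2. exact Hy.
Qed.

Lemma pre_open (U : X -> Prop) g : open_set d U -> continuous_map d g ->
  open_set d (fun y => U (g y)).
Proof.
  intros HU Hg x Hx. destruct (HU _ Hx) as (e & He & H).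
  destruct (Hg x e He) as (e2 & He2 & H2). exists e2. split; auto.
Qed.

Lemma open_and (A B : X -> Prop) : open_set d A -> open_set d B ->
  open_set d (fun y => A y /\ B y).
Proof.
  intros HA HB x [Ax Bx]. destruct (HA _ Ax) as (e1 & He1 & H1).
  destruct (HB _ Bx) as (e2 & He2 & H2). exists (Rmin e1 e2). split.
  - apply Rmin_glb_lt; auto.
  - intros y Hy. pose proof (Rmin_l e1 e2). pose proof (Rmin_r e1 e2).
    split; [apply H1|apply H2]; lra.
Qed.

Lemma open_true : open_set d (fun _ => True).
Proof. intros x _. exists 1. split; [lra|auto]. Qed.

Lemma open_fin (U : nat -> X -> Prop) r : (forall i, (i < r)%nat -> open_set d (U i)) ->
  open_set d (fun y => forall i, (i < r)%nat -> U i y).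
Proof.
  induction r as [|r IH]; intros H.
  - intros x _. exists 1. split; [lra|]. intros y _ i Hi. lia.
  - assert (Ho : open_set d (fun y => (forall i, (i < r)%nat -> U i y) /\ U r y)).
    { apply open_and; auto. }
    intros x Hx. destruct (Ho x) as (e & He & Hy).
    { split; auto. }
    exists e. split; auto. intros y Hdy i Hi. destruct (Hy y Hdy) as [A B].
    destruct (Nat.eq_dec i r); [subst; auto|apply A; lia].
Qed.

Lemma open_union (U : nat -> X -> Prop) : (forall k, open_set d (U k)) ->
  open_set d (fun y => exists k, U k y).
Proof.
  intros H x [k Hk]. destruct (H k x Hk) as (e & He & H1). exists e. split; auto.
  intros y Hy. exists k. auto.
Qed.

Lemma open_prop (P : Prop) (U : X -> Prop) : (P -> open_set d U) ->
  open_set d (fun y => P /\ U y).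
Proof.
  intros H x [p Ux]. destruct (H p x Ux) as (e & He & H1). exists e. split; auto.
Qed.

Lemma iter_plus a b x : iter f (a + b) x = iter f a (iter f b x).
Proof. unfold iter. apply Nat.iter_add. Qed.

Fixpoint rmin (g : nat -> R) (n : nat) : R :=
  match n with 0 => g 0%nat | S n => Rmin (g (S n)) (rmin g n) end.

Lemma rmin_pos g n : (forall i, 0 < g i) -> 0 < rmin g n.
Proof. intros H; induction n; simpl; auto. apply Rmin_glb_lt; auto. Qed.

Lemma rmin_le g n i : (i <= n)%nat -> rmin g n <= g i.
Proof.
  induction n; intros Hi; simpl.
  - replace i with 0%nat by lia. lra.
  - destruct (Nat.eq_dec i (S n)). subst. apply Rmin_l.
    pose proof (Rmin_r (g (S n)) (rmin g n)). pose proof (IHn ltac:(lia)). lra.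
Qed.

Lemma hit_open n x : (forall z, omega_limit_diag d f n x z) ->
  forall U : nat -> X -> Prop,
  (forall i, (1 <= i <= n)%nat -> open_set d (U i) /\ exists y, U i y) ->
  forall N, exists m, (N <= m)%nat /\ forall i, (1 <= i <= n)%nat -> U i (iter f (i * m) x).
Proof.
  intros Hx U HU N.
  assert (H : forall i, exists ze : X * R, 0 < snd ze /\
     ((1 <= i <= n)%nat -> forall y, d (fst ze) y < snd ze -> U i y)).
  { intro i. destruct (classic (1 <= i <= n)%nat) as [Hi|Hi].
    - destruct (HU i Hi) as [Ho [y Hy]]. destruct (Ho y Hy) as (e & He & H1).
      exists (y, e). simpl. auto.
    - exists (x, 1). simpl. split; [lra|]. intro; contradiction. }
  set (zf := fun i => proj1_sig (constructive_indefinite_description _ (H i))).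
  assert (Hzf : forall i, 0 < snd (zf i) /\
     ((1 <= i <= n)%nat -> forall y, d (fst (zf i)) y < snd (zf i) -> U i y)).
  { intro i. unfold zf. destruct (constructive_indefinite_description _ (H i)). auto. }
  destruct (Hx (fun i => fst (zf i)) (rmin (fun i => snd (zf i)) n)
              (rmin_pos _ _ (fun i => proj1 (Hzf i))) N) as (m & Hm & Hd2).
  exists m. split; auto. intros i Hi. apply (proj2 (Hzf i) Hi).
  rewrite dsym. pose proof (Hd2 i Hi). pose proof (rmin_le (fun i => snd (zf i)) n i ltac:(lia)).
  simpl in *. lra.
Qed.

Definition dec (s j : nat) : nat := fst (of_nat (Nat.iter j (fun c => snd (of_nat c)) s)).

Lemma dec_surj r (n : nat -> nat) : exists s, forall j, (j < r)%nat -> dec s j = n j.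
Proof.
  revert n. induction r as [|r IH]; intros n.
  - exists 0%nat. intros; lia.
  - destruct (IH (fun j => n (S j))) as [s' Hs']. exists (to_nat (n 0%nat, s')).
    intros [|j] Hj; unfold dec.
    + change (fst (of_nat (to_nat (n 0%nat, s'))) = n 0%nat). rewrite cancel_of_to. reflexivity.
    + rewrite Nat.iter_succ_r. rewrite cancel_of_to. simpl. apply Hs'. lia.
Qed.

Fixpoint msum (p : nat -> nat) (n : nat) : nat :=
  match n with 0 => p 0%nat | S n => (p (S n) + msum p n)%nat end.
Lemma msum_le p n i : (i <= n)%nat -> (p i <= msum p n)%nat.
Proof. induction n; intros Hi; simpl. replace i with 0%nat by lia; lia.
  destruct (Nat.eq_dec i (S n)). subst; lia. specialize (IHn ltac:(lia)). lia. Qed.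

Lemma partA x : F_transitive_point d F_inf f x -> Delta_transitive d f.
Proof.
  intros Hx n Hn. exists x. intros z eps He N.
  assert (H : forall i, exists p, d (iter f p x) (z i) < eps).
  { intro i. assert (Ho : open_set d (fun y => d y (z i) < eps)).
    { intros y Hy. destruct (ball_open (z i) eps y) as (e & He1 & H1). rewrite dsym; auto.
      exists e. split; auto. intros w Hw. rewrite dsym. auto. }
    assert (Hne : exists y, d y (z i) < eps) by (exists (z i); rewrite dzero; lra).
    destruct (Hx _ Ho Hne 1%nat (le_n 1) (fun _ => 0%nat))
      as (k & Hk & H1).
    destruct (H1 0%nat ltac:(simpl; lia)) as [_ H2]. eexists; exact H2. }
  set (p := fun i => proj1_sig (constructive_indefinite_description _ (H i))).
  assert (Hp : forall i, d (iter f (p i) x) (z i) < eps).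
  { intro i. unfold p. destruct (constructive_indefinite_description _ (H i)). auto. }
  set (c := (N + msum p n)%nat).
  set (W := fun y => forall i, (i < n)%nat -> d (iter f (p (S i)) y) (z (S i)) < eps).
  assert (HW : open_set d W).
  { apply open_fin. intros i _. apply (pre_open (fun y => d y (z (S i)) < eps)).
    - intros y Hy. destruct (ball_open (z (S i)) eps y) as (e & He1 & H1). rewrite dsym; auto.
      exists e. split; auto. intros w Hw. rewrite dsym. auto.
    - apply iter_cont. }
  destruct (Hx W HW (ex_intro _ x (fun i _ => Hp (S i))) n Hn
     (fun j => (S j * c - p (S j))%nat)) as (k & Hk & H1).
  exists (k + c)%nat. split. unfold c; lia.
  intros i Hi. destruct i as [|j]; [lia|].
  destruct (H1 j ltac:(rewrite length_seq; lia)) as [_ H2].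
  rewrite seq_nth in H2 by lia.
  specialize (H2 j ltac:(lia)). rewrite <- iter_plus in H2.
  assert (Hpj : (p (S j) <= c)%nat) by (pose proof (msum_le p n (S j) ltac:(lia)); unfold c; lia).
  replace (S j * (k + c))%nat with (p (S j) + (k * (1 + j) + (S j * c - p (S j))))%nat. exact H2.
  assert (p (S j) <= S j * c)%nat by nia. nia.
Qed.

Lemma list_max (l : list nat) : exists M, forall k, In k l -> (k <= M)%nat.
Proof.
  induction l as [|a l [M HM]]. exists 0%nat; intros k [].
  exists (Nat.max a M). intros k [<-|Hk]. lia. specialize (HM k Hk). lia.
Qed.

Lemma partB (A : X -> Prop) : residual_set d A -> exists x, A x.
Proof.
  intros (V & HV & HA).
  assert (Hstep : forall k (s : X * R), exists s' : X * R, 0 < snd s ->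
     0 < snd s' /\ forall w, d (fst s') w <= snd s' -> d (fst s) w < snd s /\ V k w).
  { intros k [c r]. destruct (Rlt_dec 0 r) as [Hr|Hr].
    - assert (Hne : exists y, d c y < r) by (exists c; rewrite dzero; lra).
      destruct (proj2 (HV k) _ (ball_open c r) Hne)
        as (y & Hy1 & Hy2).
      destruct (open_and _ _ (ball_open c r) (proj1 (HV k)) y (conj Hy1 Hy2)) as (e & He & H1).
      exists (y, e / 2). simpl. intros _. split; [lra|]. intros w Hw. apply H1. lra.
    - exists (c, r). intro; simpl in *; contradiction. }
  set (step := fun k s => proj1_sig (constructive_indefinite_description _ (Hstep k s))).
  assert (Hst : forall k s, 0 < snd s -> 0 < snd (step k s) /\ forall w,
     d (fst (step k s)) w <= snd (step k s) -> d (fst s) w < snd s /\ V k w).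
  { intros k s. unfold step. destruct (constructive_indefinite_description _ (Hstep k s)). auto. }
  set (sq := fix sq (k : nat) : X * R := match k with 0 => (x0, 1) | S k => step k (sq k) end).
  assert (Hpos : forall k, 0 < snd (sq k)).
  { induction k; simpl. lra. apply Hst. exact IHk. }
  set (K := fun k w => d (fst (sq k)) w <= snd (sq k)).
  assert (Hnest1 : forall k w, K (S k) w -> K k w /\ V k w).
  { intros k w Hw. destruct (Hst k (sq k) (Hpos k)) as [_ H]. destruct (H w Hw). split; auto.
    unfold K; lra. }
  assert (Hnest : forall j k w, (k <= j)%nat -> K j w -> K k w).
  { induction j; intros k w Hkj Hw. replace k with 0%nat by lia; auto.
    destruct (Nat.eq_dec k (S j)). subst; auto. apply IHj. lia. apply Hnest1; auto. }
  assert (Hex : exists w, forall k, K k w).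
  { apply NNPP. intro Hn.
    assert (Hcov : forall w, exists k, snd (sq k) < d (fst (sq k)) w).
    { intro w. apply NNPP. intro H1. apply Hn. exists w. intro k. unfold K.
      apply Rnot_lt_le. intro H2. apply H1. exists k; auto. }
    assert (Hop : forall k, open_set d (fun w => snd (sq k) < d (fst (sq k)) w)).
    { intros k w Hw. exists (d (fst (sq k)) w - snd (sq k)). split; [lra|].
      intros y Hy. pose proof (dtri (fst (sq k)) y w). rewrite (dsym y w) in H. lra. }
    destruct (Hc nat _ Hop Hcov) as [l Hl]. destruct (list_max l) as [M HM].
    destruct (Hl (fst (sq M))) as (k & Hk & H1).
    assert (HK : K M (fst (sq M))).
    { unfold K. rewrite dzero. left. apply Hpos. }
    pose proof (Hnest M k _ (HM k Hk) HK). unfold K in H. lra. }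
  destruct Hex as [w Hw]. exists w. apply HA. intro k. apply (Hnest1 k w (Hw (S k))).
Qed.

Lemma partC : Delta_transitive d f -> residual_set d (F_transitive_point d F_inf f).
Proof.
  intros HD.
  destruct (HD 1%nat (le_n 1)) as [x1 Hx1].
  set (B := fun p q y => d (iter f p x1) y < / INR (S q)).
  assert (HBo : forall p q, open_set d (B p q)) by (intros; apply ball_open).
  assert (HBne : forall p q, exists y, B p q y).
  { intros p q. exists (iter f p x1). unfold B.
    rewrite dzero. apply Rinv_0_lt_compat, lt_0_INR. lia. }
  assert (Hbase : forall U, open_set d U -> forall y, U y ->
     exists p q, forall w, B p q w -> U w).
  { intros U HU y Hy. destruct (HU y Hy) as (e & He & H1).
    destruct (archimed_cor1 (e/2) ltac:(lra)) as (q' & Hq & Hq').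
    destruct (hit_open 1 x1 Hx1 (fun _ w => d y w < / INR q') ) with (N := 0%nat)
      as (m & _ & Hm).
    { intros i _. split. apply ball_open. exists y.
      rewrite dzero. apply Rinv_0_lt_compat, lt_0_INR. lia. }
    specialize (Hm 1%nat ltac:(lia)). rewrite Nat.mul_1_l in Hm.
    exists m, (q' - 1)%nat. intros w Hw. apply H1. unfold B in Hw.
    replace (S (q' - 1)) with q' in Hw by lia.
    pose proof (dtri y (iter f m x1) w). lra. }
  set (G := fun p q r s y => exists k, (1 <= k)%nat /\
       forall j, (j < r)%nat -> B p q (iter f (k * S j + dec s j) y)).
  set (V := fun t => let '(p, t1) := of_nat t in let '(q, t2) := of_nat t1 in
            let '(r, s) := of_nat t2 in G p q r s).
  exists V. split.
  - intro t. unfold V. destruct (of_nat t) as [p t1]. destruct (of_nat t1) as [q t2].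
    destruct (of_nat t2) as [r s]. split.
    + apply open_union. intro k. apply open_prop. intros _. apply open_fin.
      intros j _. apply (pre_open (B p q)). apply HBo. apply iter_cont.
    + intros U HU [y Hy].
      destruct (HD (S r) ltac:(lia)) as [x Hx].
      set (W := fun j y => B p q (iter f (dec s j) y)).
      assert (HWne : forall j, exists y, W j y).
      { intro j. destruct (HBne p q) as [c Hcc].
        destruct (hit_open (S r) x Hx (fun _ => B p q)) with (N := dec s j) as (m & Hm & H1).
        { intros; split; [apply HBo|exists c; auto]. }
        specialize (H1 1%nat ltac:(lia)). rewrite Nat.mul_1_l in H1.
        exists (iter f (m - dec s j) x). unfold W. rewrite <- iter_plus.
        replace (dec s j + (m - dec s j))%nat with m by lia. exact H1. }
      set (UU := fun i => match i with 0 | 1 => U | S (S j) => W j end).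
      destruct (hit_open (S r) x Hx UU) with (N := 1%nat) as (m & Hm & H1).
      { intros [|[|j]] Hi; simpl. lia. split; eauto.
        split. apply (pre_open (B p q) (iter f (dec s j))). apply HBo. apply iter_cont. apply HWne. }
      exists (iter f m x). split.
      * specialize (H1 1%nat ltac:(lia)). rewrite Nat.mul_1_l in H1. exact H1.
      * exists m. split; auto. intros j Hj. specialize (H1 (S (S j)) ltac:(lia)).
        simpl UU in H1. unfold W in H1. rewrite <- !iter_plus in *.
        replace (m * S j + dec s j + m)%nat with (dec s j + S (S j) * m)%nat by nia.
        exact H1.
  - intros y Hy U HU [u Hu] i Hi n.
    destruct (Hbase U HU u Hu) as (p & q & Hpq).
    destruct (dec_surj i n) as [s Hs].
    specialize (Hy (to_nat (p, to_nat (q, to_nat (i, s))))). unfold V in Hy.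
    rewrite !cancel_of_to in Hy. destruct Hy as (k & Hk & H1).
    exists k. split; auto. intros j Hj. rewrite length_seq in Hj.
    rewrite seq_nth by lia. split. nia.
    apply Hpq. rewrite <- (Hs j Hj). replace (k * (1 + j))%nat with (k * S j)%nat by lia.
    apply H1; auto.
Qed.

End Proof5p7.

Theorem theorem5p7 (X : Type) (d : X -> X -> R) (x0 : X)
  (Hd : is_metric d) (Hc : compact_metric d) (f : X -> X) (Hf : continuous_map d f) :
  (Delta_transitive d f <-> exists x, F_transitive_point d F_inf f x) /\
  ((exists x, F_transitive_point d F_inf f x) <->
     residual_set d (F_transitive_point d F_inf f)).
Proof.
  split; split.
  - intro H. apply (partB X d x0 Hd Hc). apply (partC X d Hd f Hf H).
  - intros [x Hx]. apply (partA X d Hd f Hf x Hx).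
  - intros [x Hx]. apply (partC X d Hd f Hf). apply (partA X d Hd f Hf x Hx).
  - apply (partB X d x0 Hd Hc).
Qed.
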